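(* For every $a\ge0$, the set $\mathcal{P}^+$ is dense in $\mathcal{L}^+_a$ with respect to the topology of $\mathcal{A}_a$.
   Context: For $b>0$, $\|f\|_b=\sup_{k\in\mathbb{N}_0}b^{-k}|f^{(k)}(0)|$; $\mathcal{A}_a=\{f\text{ entire}:\|f\|_b<\infty\ \forall b>a\}$ with topology generated by $\{\|\cdot\|_b:b>a\}$. $\mathcal{L}^+$ is the set of entire functions $Cz^le^{\alpha z}\prod_{j\ge1}(1+\beta_jz)$ with $C\in\mathbb{C}$, $l\in\mathbb{N}_0$, $\alpha\ge0$, $\beta_j\ge\beta_{j+1}\ge0$, $\sum_j\beta_j<\infty$; $\mathcal{L}^+_a=\mathcal{L}^+\cap\mathcal{A}_a$; $\mathcal{P}^+$ is the set of polynomials belonging to $\mathcal{L}^+$. *)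

(* Defs.v *)
From Stdlib Require Import Reals List.
From Coquelicot Require Import Coquelicot.
Open Scope R_scope.

Definition C_is_derive (f : C -> C) (z : C) (l : C) : Prop :=
  @is_derive C_AbsRing C_NormedModule f z l.

Definition entire (f : C -> C) : Prop :=
  forall z : C, exists l : C, C_is_derive f z l.

(* D is the sequence of successive complex derivatives of f:
   D 0 = f and D (k+1) is the derivative of D k everywhere.
   For an entire f such a sequence exists and is unique, so D k 0 = f^(k)(0). *)
Definition deriv_chain (f : C -> C) (D : nat -> C -> C) : Prop :=
  (forall z, D O z = f z) /\
  (forall (k : nat) (z : C), C_is_derive (D k) z (D (S k) z)).

(* ||f||_b = sup_k b^{-k} |f^(k)(0)|, valued in the extended reals. *)
Definition seminorm (f : C -> C) (b : R) : Rbar :=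
  Lub_Rbar (fun r : R => exists (D : nat -> C -> C) (k : nat),
                deriv_chain f D /\ r = / (b ^ k) * Cmod (D k (RtoC 0))).

Definition in_A (a : R) (f : C -> C) : Prop :=
  entire f /\ forall b : R, a < b -> Rbar_lt (seminorm f b) p_infty.

Definition cexp (z : C) : C :=
  (exp (fst z) * cos (snd z), exp (fst z) * sin (snd z)).

Fixpoint partial_prod (beta : nat -> R) (z : C) (n : nat) : C :=
  match n with
  | O => RtoC 1
  | S m => Cmult (partial_prod beta z m) (Cplus (RtoC 1) (Cmult (RtoC (beta m)) z))
  end.

(* Laguerre-Polya type class L^+ : f(z) = C z^l e^{alpha z} prod_j (1 + beta_j z),
   alpha >= 0, beta_j >= beta_{j+1} >= 0, sum beta_j < oo
   (indices shifted to start at j = 0). *)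
Definition in_Lplus (f : C -> C) : Prop :=
  exists (c : C) (l : nat) (alpha : R) (beta : nat -> R),
    0 <= alpha /\
    (forall j, beta (S j) <= beta j) /\
    (forall j, 0 <= beta j) /\
    ex_series beta /\
    forall z : C, exists P : C,
      filterlim (partial_prod beta z) eventually (locally P) /\
      f z = Cmult (Cmult (Cmult c (Cpow z l)) (cexp (Cmult (RtoC alpha) z))) P.

Definition in_Lplus_a (a : R) (f : C -> C) : Prop := in_Lplus f /\ in_A a f.

Definition is_poly (f : C -> C) : Prop :=
  exists (n : nat) (c : nat -> C), forall z : C,
    f z = fold_right Cplus (RtoC 0) (map (fun k => Cmult (c k) (Cpow z k)) (seq 0 n)).

Definition in_Pplus (f : C -> C) : Prop := is_poly f /\ in_Lplus f.

(* Main.v *)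
Require Import Defs.
From Stdlib Require Import Reals List Lra Lia Classical.
From Coquelicot Require Import Coquelicot.
Open Scope R_scope.

Lemma C_minus_R (y t : R) : @minus (AbsRing_NormedModule C_AbsRing) (RtoC y) (RtoC t) = RtoC (y - t).
Proof. unfold minus, plus, opp; simpl. unfold Cplus, Copp, RtoC; simpl. f_equal; ring. Qed.

Lemma CR_aux (h : C -> C) (t : R) (l : C) :
  C_is_derive h (RtoC t) l ->
  forall eps : posreal, exists d : posreal, forall y : R, Rabs (y - t) < d ->
    Cmod (h (RtoC y) - h (RtoC t) - RtoC (y - t) * l)%C <= eps * Rabs (y - t).
Proof.
  intros [_ Hd] eps.
  specialize (Hd (RtoC t) (fun P HP => HP)).
  destruct (Hd eps) as [d Hdd]; exists d; intros y Hy.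
  assert (Hb : @ball (AbsRing_UniformSpace C_AbsRing) (RtoC t) d (RtoC y)).
  { unfold ball; simpl; unfold AbsRing_ball. rewrite C_minus_R. simpl. rewrite Cmod_R. exact Hy. }
  specialize (Hdd _ Hb). rewrite C_minus_R in Hdd.
  unfold norm in Hdd; simpl in Hdd. rewrite Cmod_R in Hdd. exact Hdd.
Qed.

Lemma CR_derive (h : C -> C) (t : R) (l : C) :
  C_is_derive h (RtoC t) l ->
  is_derive (fun s : R => fst (h (RtoC s))) t (fst l) /\
  is_derive (fun s : R => snd (h (RtoC s))) t (snd l).
Proof.
  intros H. pose proof (CR_aux h t l H) as A.
  split; apply is_derive_Reals; intros eps Heps;
  destruct (A (mkposreal (eps/2) ltac:(lra))) as [d Hd]; exists d; intros u Hu0 Hu;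
  specialize (Hd (t + u)); replace (t + u - t) with u in Hd by ring;
  specialize (Hd Hu); simpl in Hd;
  assert (Hu' : 0 < Rabs u) by (apply Rabs_pos_lt; auto).
  - pose proof (re_le_Cmod (h (RtoC (t + u)) - h (RtoC t) - RtoC u * l)%C) as R1.
    unfold Re in R1; simpl in R1.
    replace ((fst (h (RtoC (t + u))) - fst (h (RtoC t))) / u - fst l)
      with ((fst (h (RtoC (t + u))) + - fst (h (RtoC t)) + - (u * fst l - 0 * snd l)) / u) by (field; auto).
    rewrite Rabs_div by auto.
    apply (Rmult_lt_reg_r (Rabs u)); auto. unfold Rdiv. rewrite Rmult_assoc, Rinv_l by lra. nra.
  - assert (R1 := Rle_trans _ _ _ (Rmax_r _ _) (Rmax_Cmod (h (RtoC (t + u)) - h (RtoC t) - RtoC u * l)%C)).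
    simpl in R1.
    replace ((snd (h (RtoC (t + u))) - snd (h (RtoC t))) / u - snd l)
      with ((snd (h (RtoC (t + u))) + - snd (h (RtoC t)) + - (u * snd l + 0 * fst l)) / u) by (field; auto).
    rewrite Rabs_div by auto.
    apply (Rmult_lt_reg_r (Rabs u)); auto. unfold Rdiv. rewrite Rmult_assoc, Rinv_l by lra. nra.
Qed.

Lemma CV_radius_inf (b : nat -> R) :
  (forall x, exists M, forall n, Rabs (b n * x ^ n) <= M) -> CV_radius b = p_infty.
Proof.
  intros H. rewrite <- (is_lub_Rbar_unique _ _ (CV_radius_bounded b)).
  apply is_lub_Rbar_unique. split.
  - intros x _. simpl. exact I.
  - intros u Hu. destruct u as [r| |]; simpl; auto.
    + specialize (Hu (r + 1) (H (r+1))). simpl in Hu. lra.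
    + specialize (Hu 0 (H 0)). simpl in Hu. exact Hu.
Qed.

Lemma CL (g : C -> C) (c : C) (b : nat -> R) :
  (forall x, exists M, forall n, Rabs (b n * x ^ n) <= M) ->
  (forall t : R, g (RtoC t) = (c * RtoC (PSeries b t))%C) ->
  forall D, deriv_chain g D ->
  forall k, D k (RtoC 0) = (c * RtoC (b k * INR (Factorial.fact k)))%C.
Proof.
  intros Hb Hg D [HD0 HDS].
  assert (Hr : forall x, Rbar_lt (Rabs x) (CV_radius b)).
  { intros x. rewrite CV_radius_inf by exact Hb. simpl. exact I. }
  assert (K : forall k t, D k (RtoC t) = (c * RtoC (Derive_n (PSeries b) k t))%C).
  { induction k as [|k IH]; intros t.
    - rewrite HD0, Hg. reflexivity.
    - destruct (CR_derive (D k) t (D (S k) (RtoC t)) (HDS k (RtoC t))) as [H1 H2].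
      assert (E : ex_derive (Derive_n (PSeries b) k) t).
      { exact (ex_derive_n_PSeries (S k) b t (Hr t)). }
      apply Derive_correct in E.
      assert (F1 : is_derive (fun s => fst (D k (RtoC s))) t (fst c * Derive_n (PSeries b) (S k) t)).
      { eapply is_derive_ext. intros s. rewrite IH. simpl. instantiate (1 := fun s => fst c * Derive_n (PSeries b) k s). simpl. ring.
        apply is_derive_scal. exact E. }
      assert (F2 : is_derive (fun s => snd (D k (RtoC s))) t (snd c * Derive_n (PSeries b) (S k) t)).
      { eapply is_derive_ext. intros s. rewrite IH. simpl. instantiate (1 := fun s => snd c * Derive_n (PSeries b) k s). simpl. ring.
        apply is_derive_scal. exact E. }
      apply is_derive_unique in H1, H2, F1, F2.
      pose proof (eq_trans (eq_sym H1) F1) as G1. pose proof (eq_trans (eq_sym H2) F2) as G2. clear H1 H2 F1 F2.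
      destruct (D (S k) (RtoC t)) as [u v]. destruct c as [c1 c2]. simpl in *.
      unfold Cmult, RtoC; simpl. f_equal; [rewrite G1 | rewrite G2]; ring. }
  intros k. rewrite K. rewrite Derive_n_coef. reflexivity.
  rewrite CV_radius_inf by exact Hb. simpl. exact I.
Qed.

Fixpoint ssum (f : nat -> R) (n : nat) : R :=
  match n with O => 0 | S m => ssum f m + f m end.

Lemma sum_n_ssum (f : nat -> R) n : sum_n f n = ssum f (S n).
Proof.
  induction n as [|n IH].
  - rewrite sum_O. simpl. ring.
  - rewrite sum_Sn, IH. simpl. unfold plus; simpl. ring.
Qed.

Lemma ssum_ext f g n : (forall k, (k < n)%nat -> f k = g k) -> ssum f n = ssum g n.
Proof. induction n; simpl; intros H; auto. rewrite IHn, H; auto. Qed.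

Lemma ssum_le f g n : (forall k, (k < n)%nat -> f k <= g k) -> ssum f n <= ssum g n.
Proof. induction n; simpl; intros H; [lra|]. pose proof (H n ltac:(lia)). pose proof (IHn ltac:(intros; apply H; lia)). lra. Qed.

Lemma ssum_nonneg f n : (forall k, 0 <= f k) -> 0 <= ssum f n.
Proof. intros H; induction n; simpl; [lra|]. pose proof (H n); lra. Qed.

Lemma ssum_plus f g n : ssum (fun k => f k + g k) n = ssum f n + ssum g n.
Proof. induction n; simpl; [ring|]. rewrite IHn; ring. Qed.

Lemma ssum_minus f g n : ssum (fun k => f k - g k) n = ssum f n - ssum g n.
Proof. induction n; simpl; [ring|]. rewrite IHn; ring. Qed.

Lemma ssum_scal c f n : ssum (fun k => c * f k) n = c * ssum f n.
Proof. induction n; simpl; [ring|]. rewrite IHn; ring. Qed.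

Lemma ssum_abs f n : Rabs (ssum f n) <= ssum (fun k => Rabs (f k)) n.
Proof. induction n; simpl. rewrite Rabs_R0; lra. eapply Rle_trans. apply Rabs_triang. lra. Qed.

Lemma ssum_term f n k : (forall k, 0 <= f k) -> (k < n)%nat -> f k <= ssum f n.
Proof.
  intros H; induction n; intros Hk; [lia|]. simpl.
  destruct (Nat.eq_dec k n) as [->|Hne].
  - pose proof (ssum_nonneg f n H). lra.
  - pose proof (IHn ltac:(lia)). pose proof (H n). lra.
Qed.

Lemma ssum_mono f n m : (forall k, 0 <= f k) -> (n <= m)%nat -> ssum f n <= ssum f m.
Proof.
  intros H Hnm; induction Hnm; [lra|]. simpl. pose proof (H m). lra.
Qed.

Lemma ssum_supp f n m : (forall k, (n <= k)%nat -> f k = 0) -> (n <= m)%nat -> ssum f m = ssum f n.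
Proof.
  intros H Hnm; induction Hnm; [auto|]. simpl. rewrite H by lia. lra.
Qed.

Definition mulx (x : R) (u : nat -> R) (k : nat) : R :=
  u k + match k with O => 0 | S k' => x * u k' end.
Definition e0 (k : nat) : R := match k with O => 1 | S _ => 0 end.
Definition ecoef (L : list R) : nat -> R := fold_right mulx e0 L.
Definition rprod (L : list R) (t : R) : R := fold_right (fun x acc => (1 + x * t) * acc) 1 L.

Lemma ecoef_supp L k : (length L < k)%nat -> ecoef L k = 0.
Proof.
  revert k; induction L as [|x L IH]; intros k Hk; simpl in *.
  - destruct k; [lia|reflexivity].
  - unfold mulx. destruct k; [lia|]. rewrite !IH by lia. ring.
Qed.

Lemma ssum_mulx x u t n :
  ssum (fun k => mulx x u k * t ^ k) (S n) = ssum (fun k => u k * t ^ k) (S n) + x * t * ssum (fun k => u k * t ^ k) n.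
Proof.
  induction n as [|n IH].
  - simpl. unfold mulx. ring.
  - change (ssum (fun k => mulx x u k * t ^ k) (S (S n))) with
      (ssum (fun k => mulx x u k * t ^ k) (S n) + mulx x u (S n) * t ^ (S n)).
    rewrite IH. simpl. unfold mulx. ring.
Qed.

Lemma ecoef_sum L t n : (length L < n)%nat -> ssum (fun k => ecoef L k * t ^ k) n = rprod L t.
Proof.
  revert n; induction L as [|x L IH]; intros n Hn; simpl in *.
  - destruct n; [lia|]. rewrite (ssum_supp _ 1 (S n)).
    + simpl. ring.
    + intros k Hk. destruct k; [lia|]. simpl. ring.
    + lia.
  - destruct n as [|n]; [lia|]. change (ecoef (x :: L)) with (mulx x (ecoef L)).
    rewrite ssum_mulx. rewrite !IH by lia. ring.
Qed.

Definition dom (u v : nat -> R) := forall k, 0 <= u k <= v k.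

Lemma mulx_mono x u v : 0 <= x -> dom u v -> dom (mulx x u) (mulx x v).
Proof.
  intros Hx H k. unfold mulx. destruct k.
  - specialize (H 0%nat). lra.
  - pose proof (H (S k)). pose proof (H k). split; nra.
Qed.

Lemma mulx_ge x u : 0 <= x -> (forall k, 0 <= u k) -> dom u (mulx x u).
Proof.
  intros Hx H k. unfold mulx. destruct k.
  - specialize (H 0%nat). lra.
  - pose proof (H (S k)). pose proof (H k). split; nra.
Qed.

Lemma fold_mono A u v : (forall y, In y A -> 0 <= y) -> dom u v ->
  dom (fold_right mulx u A) (fold_right mulx v A).
Proof.
  induction A as [|y A IH]; simpl; intros HA H; auto.
  apply mulx_mono; auto.
Qed.

Lemma rep_step y U V : 0 <= y -> dom U V -> dom (mulx y U) (mulx (y/2) (mulx (y/2) V)).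
Proof.
  intros Hy H k. unfold mulx. destruct k as [|[|k]].
  - specialize (H 0%nat). lra.
  - pose proof (H 1%nat). pose proof (H 0%nat). split; nra.
  - pose proof (H (S (S k))). pose proof (H (S k)). pose proof (H k). split; nra.
Qed.

Lemma rep_mono y m u v : 0 <= y -> dom u v ->
  dom (fold_right mulx u (repeat y m)) (fold_right mulx v (repeat (y/2) (2*m))).
Proof.
  intros Hy H. induction m as [|m IH]; simpl; auto.
  replace (m + S (m + 0))%nat with (S (m + (m + 0)))%nat by lia. simpl.
  apply rep_step; auto.
Qed.

Lemma ecoef_nonneg L : (forall y, In y L -> 0 <= y) -> forall k, 0 <= ecoef L k.
Proof.
  induction L as [|x L IH]; simpl; intros HL k.
  - destruct k; simpl; lra.
  - unfold mulx. destruct k.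
    + pose proof (IH ltac:(auto) 0%nat). lra.
    + pose proof (IH ltac:(auto) (S k)). pose proof (IH ltac:(auto) k). pose proof (HL x (or_introl eq_refl)). nra.
Qed.

Lemma ssum_lim (u : nat -> nat -> R) (a : nat -> R) K :
  (forall k, is_lim_seq (fun j => u j k) (a k)) ->
  is_lim_seq (fun j => ssum (u j) K) (ssum a K).
Proof.
  intros H; induction K as [|K IH]; simpl.
  - apply is_lim_seq_const.
  - apply is_lim_seq_plus'; auto.
Qed.

Lemma is_series_ssum (f : nat -> R) (l : R) :
  is_lim_seq (fun n => ssum f n) l -> is_series f l.
Proof.
  intros H. unfold is_series.
  apply is_lim_seq_incr_1 in H.
  eapply is_lim_seq_ext in H. exact H. intros n. simpl. now rewrite sum_n_ssum.
Qed.

Lemma G (r : nat -> nat -> R) (N : nat -> nat) (H : R -> R) :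
  (forall j k, 0 <= r j k) -> (forall j k, r j k <= r (S j) k) ->
  (forall j k, (N j <= k)%nat -> r j k = 0) ->
  (forall s, is_lim_seq (fun j => ssum (fun k => r j k * s ^ k) (N j)) (H s)) ->
  exists a : nat -> R, (forall k, is_lim_seq (fun j => r j k) (a k)) /\
    (forall j k, r j k <= a k) /\ (forall k, 0 <= a k) /\
    (forall s, is_lim_seq (fun K => ssum (fun k => a k * s ^ k) K) (H s)).
Proof.
  intros Hpos Hinc Hsupp Hlim.
  set (rho j s := ssum (fun k => r j k * s ^ k) (N j)).
  assert (L1 : forall j s M, (N j <= M)%nat -> ssum (fun k => r j k * s ^ k) M = rho j s).
  { intros j s M HM. unfold rho. apply ssum_supp; auto. intros k Hk. rewrite Hsupp by auto. ring. }
  assert (L2 : forall j s, 0 <= s -> rho j s <= rho (S j) s).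
  { intros j s Hs. rewrite <- (L1 j s (Nat.max (N j) (N (S j)))) by lia.
    rewrite <- (L1 (S j) s (Nat.max (N j) (N (S j)))) by lia.
    apply ssum_le. intros k _. apply Rmult_le_compat_r. apply pow_le; auto. auto. }
  assert (L3 : forall j s, 0 <= s -> rho j s <= H s).
  { intros j s Hs. apply (is_lim_seq_incr_compare (fun j => rho j s)). apply Hlim. intros; apply L2; auto. }
  assert (L3' : forall j s K, 0 <= s -> ssum (fun k => r j k * s ^ k) K <= H s).
  { intros j s K Hs. eapply Rle_trans. apply (ssum_mono _ K (Nat.max K (N j))).
    intros k. apply Rmult_le_pos; auto. apply pow_le; auto. lia.
    rewrite L1 by lia. auto. }
  assert (L4 : forall j k, r j k <= H 1).
  { intros j k. eapply Rle_trans; [|apply (L3' j 1 (S k)); lra].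
    replace (r j k) with (r j k * 1 ^ k) by (rewrite pow1; ring).
    apply (ssum_term (fun k => r j k * 1 ^ k)). intros; rewrite pow1; rewrite Rmult_1_r; auto. lia. }
  assert (Ex : forall k, is_lim_seq (fun j => r j k) (real (Lim_seq (fun j => r j k)))).
  { intros k. destruct (ex_finite_lim_seq_incr (fun j => r j k) (H 1)) as [l Hl].
    intros; apply Hinc. intros; apply L4.
    rewrite (is_lim_seq_unique _ _ Hl). exact Hl. }
  set (a k := real (Lim_seq (fun j => r j k))).
  assert (A1 : forall j k, r j k <= a k).
  { intros j k. apply (is_lim_seq_incr_compare (fun j => r j k)); auto. }
  assert (A0 : forall k, 0 <= a k).
  { intros k. eapply Rle_trans. apply (Hpos 0%nat k). apply A1. }
  assert (L5 : forall s K, 0 <= s -> ssum (fun k => a k * s ^ k) K <= H s).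
  { intros s K Hs.
    assert (Hl := ssum_lim (fun j k => r j k * s ^ k) (fun k => a k * s ^ k) K
                    (fun k => is_lim_seq_scal_r _ _ _ (Ex k))).
    pose proof (is_lim_seq_le _ _ _ _ (fun j => L3' j s K Hs) Hl (is_lim_seq_const (H s))) as X.
    simpl in X. exact X. }
  assert (L6 : forall s, 0 <= s -> is_lim_seq (fun K => ssum (fun k => a k * s ^ k) K) (H s)).
  { intros s Hs.
    assert (Hnn : forall k, 0 <= a k * s ^ k) by (intros; apply Rmult_le_pos; auto; apply pow_le; auto).
    destruct (ex_finite_lim_seq_incr (fun K => ssum (fun k => a k * s ^ k) K) (H s)) as [l Hl].
    { intros n; simpl. pose proof (Hnn n). lra. }
    { intros n; apply L5; auto. }
    assert (E1 : l <= H s).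
    { pose proof (is_lim_seq_le _ _ _ _ (fun K => L5 s K Hs) Hl (is_lim_seq_const (H s))) as X. exact X. }
    assert (E2 : H s <= l).
    { assert (B : forall j, rho j s <= l).
      { intros j. eapply Rle_trans.
        - unfold rho. apply ssum_le. intros k _. apply Rmult_le_compat_r. apply pow_le; auto. apply A1.
        - apply (is_lim_seq_incr_compare (fun K => ssum (fun k => a k * s ^ k) K)); auto.
          intros n; simpl. pose proof (Hnn n). lra. }
      pose proof (is_lim_seq_le _ _ _ _ B (Hlim s) (is_lim_seq_const l)) as X. exact X. }
    replace (H s) with l by lra. exact Hl. }
  exists a. split; [exact Ex|]. split; [exact A1|]. split; [exact A0|].
  intros t. set (u := Rabs t).
  assert (Hu : 0 <= u) by apply Rabs_pos.
  assert (KB : forall j K, (N j <= K)%nat ->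
     Rabs (ssum (fun k => a k * t ^ k) K - rho j t) <= H u - rho j u).
  { intros j K HK. rewrite <- (L1 j t K HK). rewrite <- (L1 j u K HK).
    rewrite <- ssum_minus. eapply Rle_trans. apply ssum_abs.
    eapply Rle_trans; [|apply Rplus_le_compat_r; apply (L5 u K Hu)].
    match goal with |- _ <= ?A + - ?B => replace (A + - B) with (A - B) by ring end. rewrite <- ssum_minus. apply Req_le. apply ssum_ext. intros k _.
    unfold u. rewrite <- Rmult_minus_distr_r. rewrite Rabs_mult, <- RPow_abs.
    rewrite (Rabs_pos_eq (a k - r j k)). ring.
    pose proof (A1 j k); lra. }
  apply is_lim_seq_spec. intros eps.
  assert (C1 := proj2 (is_lim_seq_spec _ _) (Hlim t) (pos_div_2 eps)).
  assert (C2 := proj2 (is_lim_seq_spec _ _) (Hlim u) (pos_div_2 eps)).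
  destruct (filter_and _ _ C1 C2) as [J HJ].
  exists (N J). intros K HK. destruct (HJ J (le_n _)) as [D1 D2]. simpl in D1, D2.
  specialize (KB J K HK). fold (rho J t) in D1. fold (rho J u) in D2.
  pose proof (L3 J u Hu).
  rewrite Rabs_lt_between in D1. rewrite Rabs_lt_between in D2.
  apply Rabs_lt_between. apply Rabs_le_between in KB. lra.
Qed.

Lemma two_pow_big (A : R) : exists N, forall j, (N <= j)%nat -> A < INR (2 ^ j).
Proof.
  destruct (INR_unbounded A) as [N HN]. exists N. intros j Hj.
  assert (H1 : (j < 2 ^ j)%nat) by (apply Nat.pow_gt_lin_r; lia).
  apply le_INR in Hj. apply lt_INR in H1. lra.
Qed.

Lemma explim (x : R) : is_lim_seq (fun j => (1 + x / INR (2 ^ j)) ^ (2 ^ j)) (exp x).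
Proof.
  set (m j := INR (2 ^ j)).
  assert (Hm : forall j, 0 < m j).
  { intros j. unfold m. apply lt_0_INR. apply Nat.neq_0_lt_0. apply Nat.pow_nonzero. lia. }
  assert (V : is_lim_seq (fun j => m j * ln (1 + x / m j)) x).
  { destruct (Req_dec x 0) as [->|Hx].
    - eapply is_lim_seq_ext; [|apply is_lim_seq_const]. intros j. simpl.
      unfold Rdiv. rewrite Rmult_0_l, Rplus_0_r, ln_1. ring.
    - apply is_lim_seq_spec. intros eps.
      assert (Hax : 0 < Rabs x) by (apply Rabs_pos_lt; auto).
      destruct (derivable_pt_lim_ln 1 ltac:(lra) (eps / Rabs x)) as [d Hd].
      { apply Rdiv_lt_0_compat; auto. apply cond_pos. }
      destruct (two_pow_big (Rabs x / d)) as [N HN]. exists N. intros j Hj.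
      specialize (HN j Hj). fold (m j) in HN. pose proof (Hm j) as Hmj.
      assert (Hd0 := cond_pos d).
      assert (Hh0 : x / m j <> 0) by (unfold Rdiv; apply Rmult_integral_contrapositive; split; auto; apply Rinv_neq_0_compat; lra).
      assert (Hhd : Rabs (x / m j) < d).
      { rewrite Rabs_div by lra. rewrite (Rabs_pos_eq (m j)) by lra.
        assert (E1: Rabs x < d * m j). { replace (Rabs x) with ((Rabs x / d) * d) by (field; lra). nra. }
        unfold Rdiv; apply (Rmult_lt_reg_r (m j)); auto; rewrite Rmult_assoc, Rinv_l, Rmult_1_r by lra; lra. }
      specialize (Hd (x / m j) Hh0 Hhd). rewrite ln_1, Rplus_comm in Hd.
      replace (m j * ln (1 + x / m j) - x) with (x * ((ln (x / m j + 1) - 0) / (x / m j) - / 1)).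
      + rewrite Rabs_mult. apply (Rmult_lt_reg_l (/ Rabs x)). apply Rinv_0_lt_compat; auto.
        rewrite <- Rmult_assoc, Rinv_l by lra. rewrite Rmult_1_l.
        replace (/ Rabs x * eps) with (eps / Rabs x) by (field; lra). exact Hd.
      + rewrite (Rplus_comm (x / m j) 1). field. split; lra. }
  apply (is_lim_seq_continuous exp) in V.
  2: { apply derivable_continuous_pt. apply derivable_pt_exp. }
  apply is_lim_seq_ext_loc with (2 := V).
  destruct (two_pow_big (Rabs x)) as [N HN]. exists N. intros j Hj.
  specialize (HN j Hj). fold (m j) in HN. pose proof (Hm j).
  assert (Hp : 0 < 1 + x / m j).
  { assert (Rabs (x / m j) < 1).
    { rewrite Rabs_div by lra. rewrite (Rabs_pos_eq (m j)) by lra.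
      unfold Rdiv; apply (Rmult_lt_reg_r (m j)); auto; rewrite Rmult_assoc, Rinv_l, Rmult_1_r by lra; lra. }
    apply Rabs_lt_between in H0. lra. }
  unfold m in *. rewrite <- (exp_ln ((1 + x / INR (2 ^ j)) ^ (2 ^ j))) by (apply pow_lt; auto).
  rewrite ln_pow by auto. reflexivity.
Qed.

Definition psum (c : nat -> C) (n : nat) (z : C) : C :=
  fold_right Cplus (RtoC 0) (map (fun k => Cmult (c k) (Cpow z k)) (seq 0 n)).

Lemma fold_Cplus_init (A : list C) (x : C) :
  fold_right Cplus x A = (fold_right Cplus (RtoC 0) A + x)%C.
Proof. induction A; simpl. ring. rewrite IHA. ring. Qed.

Lemma psum_S c n z : psum c (S n) z = (psum c n z + c n * Cpow z n)%C.
Proof.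
  unfold psum. rewrite seq_S, map_app, fold_right_app. simpl.
  rewrite fold_Cplus_init. f_equal. ring.
Qed.

Lemma psum_ext c d n z : (forall k, (k < n)%nat -> c k = d k) -> psum c n z = psum d n z.
Proof.
  induction n; intros H; [reflexivity|]. rewrite !psum_S. rewrite IHn by (intros; apply H; lia). rewrite H by lia. reflexivity.
Qed.

Lemma psum_lin u v c d n z :
  psum (fun k => u * c k + v * d k)%C n z = (u * psum c n z + v * psum d n z)%C.
Proof.
  induction n. unfold psum; simpl. ring. rewrite !psum_S, IHn. ring.
Qed.

Definition shiftc (c : nat -> C) (k : nat) : C := match k with O => RtoC 0 | S k' => c k' end.

Lemma psum_shift c n z : (z * psum c n z)%C = psum (shiftc c) (S n) z.
Proof.
  induction n.
  - unfold psum; simpl. ring.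
  - rewrite psum_S, (psum_S _ (S n)), <- IHn. simpl. ring.
Qed.

Lemma is_poly_mul (f : C -> C) (u v : C) :
  is_poly f -> is_poly (fun z => ((u + v * z) * f z)%C).
Proof.
  intros [n [c Hc]].
  set (cz k := if Nat.ltb k n then c k else RtoC 0).
  exists (S n), (fun k => u * cz k + v * shiftc cz k)%C. intros z.
  change (((u + v*z) * f z)%C = psum (fun k => u * cz k + v * shiftc cz k)%C (S n) z).
  rewrite psum_lin, <- psum_shift.
  assert (E2 : f z = psum cz n z).
  { rewrite Hc. apply psum_ext. intros k Hk. unfold cz. apply Nat.ltb_lt in Hk. rewrite Hk. reflexivity. }
  assert (E : f z = psum cz (S n) z).
  { rewrite psum_S, <- E2. unfold cz. rewrite Nat.ltb_irrefl. ring. }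
  rewrite <- E, <- E2. ring.
Qed.

Lemma is_poly_ext f g : is_poly f -> (forall z, f z = g z) -> is_poly g.
Proof. intros [n [c H]] E. exists n, c. intros z. rewrite <- E. apply H. Qed.

Lemma is_poly_1 : is_poly (fun _ => RtoC 1).
Proof. exists 1%nat, (fun _ => RtoC 1). intros z. simpl. ring. Qed.

Definition cprodC (L : list R) (z : C) : C :=
  fold_right (fun x acc => ((RtoC 1 + RtoC x * z) * acc)%C) (RtoC 1) L.

Lemma is_poly_p (c : C) (l : nat) (L : list R) :
  is_poly (fun z => (c * Cpow z l * cprodC L z)%C).
Proof.
  assert (H1 : is_poly (cprodC L)).
  { induction L as [|x L IH]; simpl.
    - apply is_poly_1.
    - apply (is_poly_mul _ (RtoC 1) (RtoC x)) in IH. exact IH. }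
  assert (H2 : forall l, is_poly (fun z => (Cpow z l * cprodC L z)%C)).
  { induction l0 as [|l0 IH].
    - eapply is_poly_ext; [exact H1|]. intros z; simpl; ring.
    - apply (is_poly_mul _ (RtoC 0) (RtoC 1)) in IH.
      eapply is_poly_ext; [exact IH|]. intros z; simpl; ring. }
  pose proof (is_poly_mul _ c (RtoC 0) (H2 l)) as H3.
  eapply is_poly_ext; [exact H3|]. intros z; simpl; ring.
Qed.

Fixpoint insert (x : R) (l : list R) : list R :=
  match l with
  | nil => x :: nil
  | y :: l' => if Rle_dec y x then x :: y :: l' else y :: insert x l'
  end.
Fixpoint isort (l : list R) : list R :=
  match l with nil => nil | x :: l' => insert x (isort l') end.

Fixpoint dsorted (l : list R) : Prop :=
  match l with nil => True | x :: l' => (forall y, In y l' -> y <= x) /\ dsorted l' end.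

Lemma insert_In x l y : In y (insert x l) <-> x = y \/ In y l.
Proof.
  induction l as [|z l IH]; simpl. tauto.
  destruct (Rle_dec z x); simpl; rewrite ?IH; intuition.
Qed.

Lemma isort_In l y : In y (isort l) <-> In y l.
Proof.
  induction l as [|x l IH]; simpl. tauto. rewrite insert_In, IH. intuition.
Qed.

Lemma insert_sorted x l : dsorted l -> dsorted (insert x l).
Proof.
  induction l as [|z l IH]; simpl; intros H.
  - split; auto. intros y [].
  - destruct H as [H1 H2]. destruct (Rle_dec z x) as [Hzx|Hzx].
    + simpl. split; [|split; auto]. intros y [<-|Hy]; auto. specialize (H1 y Hy). lra.
    + simpl. split; [|apply IH; auto]. intros y Hy. apply insert_In in Hy. destruct Hy as [<-|Hy]; auto. lra.
Qed.

Lemma isort_sorted l : dsorted (isort l).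
Proof. induction l; simpl; auto. apply insert_sorted; auto. Qed.

Lemma cprodC_insert x l z : cprodC (insert x l) z = ((RtoC 1 + RtoC x * z) * cprodC l z)%C.
Proof.
  induction l as [|y l IH]; simpl. reflexivity.
  destruct (Rle_dec y x); simpl. reflexivity. rewrite IH. ring.
Qed.

Lemma cprodC_isort l z : cprodC (isort l) z = cprodC l z.
Proof. induction l; simpl. reflexivity. rewrite cprodC_insert, IHl. reflexivity. Qed.

Lemma dsorted_nth l (H0 : forall y, In y l -> 0 <= y) : dsorted l ->
  forall i, nth (S i) l 0 <= nth i l 0.
Proof.
  induction l as [|x l IH]; simpl; intros Hs i.
  - destruct i; lra.
  - destruct Hs as [H1 H2]. destruct i as [|i].
    + destruct l as [|y l]; simpl. apply H0; simpl; auto. apply H1; simpl; auto.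
    + apply IH; auto. intros y Hy; apply H0; simpl; auto.
Qed.

Lemma nth_nonneg l (H0 : forall y, In y l -> 0 <= y) i : 0 <= nth i l 0.
Proof.
  destruct (Nat.lt_ge_cases i (length l)). apply H0, nth_In; auto.
  rewrite nth_overflow; auto. lra.
Qed.

Lemma pp_cons x l z n :
  partial_prod (fun j => nth j (x :: l) 0) z (S n) =
  ((RtoC 1 + RtoC x * z) * partial_prod (fun j => nth j l 0) z n)%C.
Proof.
  induction n as [|n IH].
  - simpl. ring.
  - change (partial_prod (fun j => nth j (x :: l) 0) z (S (S n))) with
      (partial_prod (fun j => nth j (x :: l) 0) z (S n) * (RtoC 1 + RtoC (nth (S n) (x :: l) 0) * z))%C.
    rewrite IH. simpl. ring.
Qed.

Lemma pp_full l z n : (length l <= n)%nat ->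
  partial_prod (fun j => nth j l 0) z n = cprodC l z.
Proof.
  revert n; induction l as [|x l IH]; intros n Hn.
  - simpl. induction n. reflexivity. simpl. rewrite IHn by (simpl; lia).
    destruct n; simpl; unfold RtoC, Cmult, Cplus; simpl; f_equal; ring.
  - destruct n as [|n]; simpl in Hn; [lia|]. rewrite pp_cons, IH by lia. reflexivity.
Qed.

Lemma cexp_0z z : cexp (RtoC 0 * z)%C = RtoC 1.
Proof.
  destruct z as [x y]. unfold cexp, Cmult, RtoC; simpl.
  replace (0 * x - 0 * y) with 0 by ring. replace (0 * y + 0 * x) with 0 by ring.
  rewrite exp_0, cos_0, sin_0. f_equal; ring.
Qed.

Lemma ex_series_fin (f : nat -> R) (N : nat) : (forall k, (N < k)%nat -> f k = 0) -> ex_series f.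
Proof.
  intros H. exists (sum_n f N). unfold is_series.
  apply filterlim_ext_loc with (f := fun _ => sum_n f N); [|apply filterlim_const].
  exists N. intros n Hn. induction Hn. reflexivity.
  rewrite sum_Sn, <- IHHn, H by lia. unfold plus; simpl. symmetry; apply Rplus_0_r.
Qed.

Lemma Pplus_of (c : C) (l : nat) (L : list R) : (forall y, In y L -> 0 <= y) ->
  in_Pplus (fun z => (c * Cpow z l * cprodC L z)%C).
Proof.
  intros HL. split; [apply is_poly_p|].
  assert (HS : forall y, In y (isort L) -> 0 <= y) by (intros y Hy; apply HL, isort_In, Hy).
  exists c, l, 0, (fun j => nth j (isort L) 0).
  split; [lra|]. split; [apply dsorted_nth; auto; apply isort_sorted|].
  split; [intros j; apply nth_nonneg; auto|].
  split.
  - apply (ex_series_fin _ (length (isort L))). intros k Hk. apply nth_overflow. lia.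
  - intros z. exists (cprodC L z). split.
    + apply filterlim_ext_loc with (f := fun _ => cprodC L z); [|apply filterlim_const].
      exists (length (isort L)). intros n Hn. rewrite pp_full by auto. symmetry; apply cprodC_isort.
    + rewrite cexp_0z. ring.
Qed.

Lemma comp_lim (u : nat -> C) (P : C) :
  filterlim u eventually (locally P) ->
  is_lim_seq (fun n => fst (u n)) (fst P) /\ is_lim_seq (fun n => snd (u n)) (snd P).
Proof.
  intros H. split; apply is_lim_seq_spec; intros eps;
  (assert (Hl : locally P (ball P eps)) by (exists eps; auto));
  destruct (H _ Hl) as [N HN]; exists N; intros n Hn; destruct (HN n Hn) as [B1 B2]; auto.
Qed.

Lemma lub_empty (E : R -> Prop) : (forall r, ~ E r) -> Lub_Rbar E = m_infty.
Proof.
  intros H. apply is_lub_Rbar_unique. split.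
  - intros x Hx. exfalso; apply (H x Hx).
  - intros b _. simpl. destruct b; simpl; auto.
Qed.

Lemma lub_le (E : R -> Prop) (m : R) : (forall r, E r -> r <= m) -> Rbar_le (Lub_Rbar E) m.
Proof.
  intros H. destruct (Lub_Rbar_correct E) as [_ H2]. apply H2. intros x Hx. simpl. auto.
Qed.

Lemma lub_fin (E : R -> Prop) (r0 : R) : E r0 -> Rbar_lt (Lub_Rbar E) p_infty ->
  exists M, forall r, E r -> r <= M.
Proof.
  intros H0 Hl. destruct (Lub_Rbar_correct E) as [H1 _].
  destruct (Lub_Rbar E) as [M| |] eqn:EM; simpl in Hl; try contradiction.
  - exists M. intros r Hr. apply (H1 r Hr).
  - exfalso. apply (H1 r0 H0).
Qed.

Lemma ev_list (P : R -> nat -> Prop) (bs : list R) :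
  (forall b, In b bs -> eventually (P b)) -> eventually (fun j => forall b, In b bs -> P b j).
Proof.
  induction bs as [|b0 bs IH]; intros H.
  - exists O. intros n _ b [].
  - destruct (filter_and _ _ (H b0 (or_introl eq_refl)) (IH (fun b Hb => H b (or_intror Hb)))) as [N HN].
    exists N. intros n Hn b Hb. destruct (HN n Hn) as [X Y]. destruct Hb as [<-|Hb]; auto.
Qed.

Lemma ev_fin (P : nat -> nat -> Prop) (K : nat) :
  (forall k, eventually (P k)) -> eventually (fun j => forall k, (k < K)%nat -> P k j).
Proof.
  intros H. induction K as [|K IH].
  - exists O. intros n _ k Hk. lia.
  - destruct (filter_and _ _ IH (H K)) as [N HN]. exists N. intros n Hn k Hk.
    destruct (HN n Hn) as [A B]. destruct (Nat.eq_dec k K) as [->|]; auto. apply A. lia.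
Qed.

Lemma FIN (A : nat -> R) (Rj : nat -> nat -> R) (M b' b e : R) :
  0 < b' -> b' < b -> 0 < e -> (forall k, A k <= M * b' ^ k) ->
  (forall j k, 0 <= Rj j k <= A k) -> (forall k, is_lim_seq (fun j => Rj j k) (A k)) ->
  eventually (fun j => forall k, / b ^ k * (A k - Rj j k) <= e).
Proof.
  intros Hb' Hbb He HA HR Hl.
  assert (HM : 0 <= M). { pose proof (HA 0%nat). pose proof (HR 0%nat 0%nat). simpl in *. lra. }
  set (q := b' / b).
  assert (Hq : 0 <= q < 1).
  { unfold q. split. apply Rmult_le_pos; [lra|]. left; apply Rinv_0_lt_compat; lra.
    apply (Rmult_lt_reg_r b); [lra|]. unfold Rdiv. rewrite Rmult_assoc, Rinv_l by lra. lra. }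
  assert (G := is_lim_seq_scal_l _ M _ (is_lim_seq_geom q ltac:(rewrite Rabs_pos_eq; lra))).
  simpl in G. rewrite Rmult_0_r in G.
  destruct (proj2 (is_lim_seq_spec _ _) G (mkposreal e He)) as [K HK].
  assert (E1 : forall k, (K <= k)%nat -> forall j, / b ^ k * (A k - Rj j k) <= e).
  { intros k Hk j. specialize (HK k Hk). simpl in HK. rewrite Rminus_0_r in HK.
    apply Rabs_lt_between in HK.
    assert (Hbk : 0 < b ^ k) by (apply pow_lt; lra).
    assert (Eq : M * q ^ k = / b ^ k * (M * b' ^ k)).
    { unfold q. unfold Rdiv. rewrite Rpow_mult_distr, pow_inv. field. lra. }
    pose proof (HR j k). pose proof (HA k).
    assert (/ b ^ k * (A k - Rj j k) <= / b ^ k * (M * b' ^ k)).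
    { apply Rmult_le_compat_l. left; apply Rinv_0_lt_compat; auto. lra. }
    lra. }
  assert (E2 : forall k, eventually (fun j => Rabs (Rj j k - A k) < e * b ^ k)).
  { intros k. assert (Hbk : 0 < b ^ k) by (apply pow_lt; lra).
    exact (proj2 (is_lim_seq_spec _ _) (Hl k) (mkposreal (e * b ^ k) ltac:(apply Rmult_lt_0_compat; lra))). }
  destruct (ev_fin _ K E2) as [N HN]. exists N. intros j Hj k.
  destruct (Nat.lt_ge_cases k K) as [Hk|Hk]; [|apply E1; auto].
  specialize (HN j Hj k Hk). apply Rabs_lt_between in HN.
  assert (Hbk : 0 < b ^ k) by (apply pow_lt; lra).
  apply (Rmult_le_reg_l (b ^ k)); auto. rewrite <- Rmult_assoc, Rinv_r, Rmult_1_l by lra. lra.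
Qed.

Fixpoint Bl (beta : nat -> R) (j : nat) : list R :=
  match j with O => nil | S j' => beta j' :: Bl beta j' end.
Definition Ll (alpha : R) (beta : nat -> R) (j : nat) : list R :=
  repeat (alpha / INR (2 ^ j)) (2 ^ j) ++ Bl beta j.

Lemma rprod_app A B t : rprod (A ++ B) t = rprod A t * rprod B t.
Proof. induction A; simpl. ring. rewrite IHA. ring. Qed.

Lemma rprod_repeat y m t : rprod (repeat y m) t = (1 + y * t) ^ m.
Proof. induction m; simpl. ring. rewrite IHm. ring. Qed.

Lemma pp_Bl beta t j : partial_prod beta (RtoC t) j = RtoC (rprod (Bl beta j) t).
Proof.
  induction j; simpl. reflexivity. rewrite IHj. unfold RtoC, Cmult, Cplus; simpl. f_equal; ring.
Qed.

Lemma cprodC_R L t : cprodC L (RtoC t) = RtoC (rprod L t).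
Proof.
  induction L; simpl. reflexivity. rewrite IHL. unfold RtoC, Cmult, Cplus; simpl. f_equal; ring.
Qed.

Lemma Cpow_R t l : Cpow (RtoC t) l = RtoC (t ^ l).
Proof.
  induction l; simpl. reflexivity. rewrite IHl. unfold RtoC, Cmult; simpl. f_equal; ring.
Qed.

Lemma INR_pow2_pos j : 0 < INR (2 ^ j).
Proof. apply lt_0_INR. apply Nat.neq_0_lt_0. apply Nat.pow_nonzero. lia. Qed.

Lemma Ll_nonneg alpha beta j : 0 <= alpha -> (forall i, 0 <= beta i) ->
  forall y, In y (Ll alpha beta j) -> 0 <= y.
Proof.
  intros Ha Hb y Hy. unfold Ll in Hy. apply in_app_or in Hy. destruct Hy as [Hy|Hy].
  - apply repeat_spec in Hy. subst y. apply Rmult_le_pos; auto. left; apply Rinv_0_lt_compat, INR_pow2_pos.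
  - induction j; simpl in Hy; [contradiction|]. destruct Hy as [<-|Hy]; auto.
Qed.

Lemma Bl_nonneg beta j : (forall i, 0 <= beta i) -> forall y, In y (Bl beta j) -> 0 <= y.
Proof. intros Hb y Hy. induction j; simpl in Hy; [contradiction|]. destruct Hy as [<-|Hy]; auto. Qed.

Lemma Ll_mono alpha beta j k : 0 <= alpha -> (forall i, 0 <= beta i) ->
  ecoef (Ll alpha beta j) k <= ecoef (Ll alpha beta (S j)) k.
Proof.
  intros Ha Hb. unfold Ll, ecoef. rewrite !fold_right_app.
  change (2 ^ S j)%nat with (2 * 2 ^ j)%nat.
  replace (alpha / INR (2 * 2 ^ j)) with ((alpha / INR (2 ^ j)) / 2).
  2: { rewrite mult_INR. simpl. pose proof (INR_pow2_pos j). field. lra. }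
  apply rep_mono.
  - apply Rmult_le_pos; auto. left; apply Rinv_0_lt_compat, INR_pow2_pos.
  - simpl. apply mulx_ge; auto. apply ecoef_nonneg, Bl_nonneg; auto.
Qed.

Lemma PS_incr_n_bound (b a : nat -> R) (l : nat) (Hs : R -> R) :
  (forall k, Rabs (b k) <= a k) ->
  (forall s K, 0 <= s -> ssum (fun k => a k * s ^ k) K <= Hs s) ->
  forall x, exists M, forall n, Rabs (PS_incr_n b l n * x ^ n) <= M.
Proof.
  intros Hab HK x. exists (Rabs x ^ l * Hs (Rabs x)). intros n.
  assert (H0 : 0 <= Hs (Rabs x)) by (apply (Rle_trans _ _ _ (Rle_refl 0) (HK _ 0%nat (Rabs_pos x)))).
  assert (Hp : 0 <= Rabs x ^ l) by (apply pow_le, Rabs_pos).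
  rewrite PS_incr_n_simplify. destruct (Compare_dec.le_lt_dec l n) as [Hn|Hn].
  - replace n with (l + (n - l))%nat at 2 by lia. rewrite pow_add, Rabs_mult, Rabs_mult, <- !RPow_abs.
    assert (Hak : 0 <= a (n - l)%nat) by (eapply Rle_trans; [apply Rabs_pos|apply Hab]).
    assert (T : a (n - l)%nat * Rabs x ^ (n - l) <= Hs (Rabs x)).
    { eapply Rle_trans; [|apply (HK _ (S (n - l))); apply Rabs_pos].
      apply (ssum_term (fun k => a k * Rabs x ^ k)); [|lia].
      intros k. apply Rmult_le_pos. eapply Rle_trans; [apply Rabs_pos|apply Hab]. apply pow_le, Rabs_pos. }
    pose proof (Hab (n - l)%nat). pose proof (pow_le (Rabs x) (n - l) (Rabs_pos x)).
    assert (Rabs (b (n - l)%nat) * Rabs x ^ (n - l) <= a (n - l)%nat * Rabs x ^ (n - l)) by (apply Rmult_le_compat_r; auto).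
    replace (Rabs (b (n - l)%nat) * (Rabs x ^ l * Rabs x ^ (n - l))) with (Rabs x ^ l * (Rabs (b (n - l)%nat) * Rabs x ^ (n - l))) by ring.
    apply Rmult_le_compat_l; auto. lra.
  - simpl. rewrite Rmult_0_l, Rabs_R0. apply Rmult_le_pos; auto.
Qed.

Lemma no_chain_case (f : C -> C) : ~ (exists D, deriv_chain f D) ->
  forall b, seminorm (fun z => Cminus (RtoC 0 * Cpow z 0 * cprodC nil z)%C (f z)) b = m_infty.
Proof.
  intros Hno b. unfold seminorm. apply lub_empty. intros r [D [k [[H0 HS] _]]].
  apply Hno. exists (fun k z => Copp (D k z)). split.
  - intros z. rewrite H0. simpl. ring.
  - intros k' z. specialize (HS k' z). unfold C_is_derive in *.
    apply (@is_derive_opp C_AbsRing C_NormedModule) in HS. exact HS.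
Qed.

Lemma PSI_eq (u : nat -> R) l n : PS_incr_n u l n = if Compare_dec.le_lt_dec l n then u (n - l)%nat else 0.
Proof. rewrite PS_incr_n_simplify. reflexivity. Qed.

Lemma PSI_minus (u v : nat -> R) l n : PS_incr_n (fun k => u k - v k) l n = PS_incr_n u l n - PS_incr_n v l n.
Proof. rewrite !PSI_eq. destruct (Compare_dec.le_lt_dec l n); lra. Qed.

Lemma PSI_le (u v : nat -> R) l n : (forall k, u k <= v k) -> PS_incr_n u l n <= PS_incr_n v l n.
Proof. intros H. rewrite !PSI_eq. destruct (Compare_dec.le_lt_dec l n); auto; lra. Qed.

Lemma PSI_nonneg (u : nat -> R) l n : (forall k, 0 <= u k) -> 0 <= PS_incr_n u l n.
Proof. intros H. rewrite !PSI_eq. destruct (Compare_dec.le_lt_dec l n); auto; lra. Qed.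

Lemma PSI_lim (u : nat -> nat -> R) (v : nat -> R) l n :
  (forall k, is_lim_seq (fun j => u j k) (v k)) -> is_lim_seq (fun j => PS_incr_n (u j) l n) (PS_incr_n v l n).
Proof.
  intros H. eapply is_lim_seq_ext. intros j; symmetry; apply PSI_eq.
  rewrite PSI_eq. destruct (Compare_dec.le_lt_dec l n); auto. apply is_lim_seq_const.
Qed.

Theorem corollary1p5 :
  forall a : R, 0 <= a ->
  forall f : C -> C, in_Lplus_a a f ->
  forall (bs : list R) (eps : R),
    0 < eps -> (forall b, In b bs -> a < b) ->
    exists p : C -> C, in_Pplus p /\
      forall b, In b bs -> Rbar_lt (seminorm (fun z => Cminus (p z) (f z)) b) eps.
Proof.
  intros a Ha f [HL HA] bs eps Heps Hbs.
  destruct (classic (exists D, deriv_chain f D)) as [[Df HDf] | Hno].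
  2: { exists (fun z => (RtoC 0 * Cpow z 0 * cprodC nil z)%C). split.
       - apply Pplus_of. intros y [].
       - intros b _. rewrite no_chain_case by auto. simpl. exact I. }
  destruct HL as [c [l [alpha [beta [Hal [Hdec [Hbpos [Hser Hf]]]]]]]].
  set (Pi t := real (Lim_seq (fun j => rprod (Bl beta j) t))).
  assert (HPi : forall t, is_lim_seq (fun j => rprod (Bl beta j) t) (Pi t) /\
     f (RtoC t) = (c * RtoC (t ^ l * (exp (alpha * t) * Pi t)))%C).
  { intros t. destruct (Hf (RtoC t)) as [P [HP Hft]].
    destruct (comp_lim _ _ HP) as [C1 C2].
    assert (E1 : forall j, fst (partial_prod beta (RtoC t) j) = rprod (Bl beta j) t)
      by (intros; rewrite pp_Bl; reflexivity).
    assert (E2 : forall j, snd (partial_prod beta (RtoC t) j) = 0)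
      by (intros; rewrite pp_Bl; reflexivity).
    apply (is_lim_seq_ext _ _ _ E1) in C1.
    apply (is_lim_seq_ext _ _ _ E2) in C2.
    assert (S0 : snd P = 0).
    { pose proof (is_lim_seq_unique _ _ C2) as U. rewrite Lim_seq_const in U. injection U; auto. }
    assert (F0 : Pi t = fst P).
    { unfold Pi. rewrite (is_lim_seq_unique _ _ C1). reflexivity. }
    split. rewrite F0; exact C1.
    rewrite Hft. rewrite Cpow_R.
    assert (EP : P = RtoC (Pi t)) by (destruct P; simpl in *; rewrite F0, S0; reflexivity).
    rewrite EP. unfold cexp, RtoC, Cmult; simpl. f_equal; ring_simplify;
    replace (alpha * 0 + 0 * t) with 0 by ring; replace (alpha * t - 0 * 0) with (alpha * t) by ring;
    rewrite cos_0, sin_0; ring. }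
  set (r j k := ecoef (Ll alpha beta j) k).
  set (H s := exp (alpha * s) * Pi s).
  destruct (G r (fun j => S (length (Ll alpha beta j))) H) as [ac [Hac1 [Hac2 [Hac3 Hac4]]]].
  { intros j k. apply ecoef_nonneg, Ll_nonneg; auto. }
  { intros j k. apply Ll_mono; auto. }
  { intros j k Hk. apply ecoef_supp. lia. }
  { intros s. eapply is_lim_seq_ext.
    { intros j. symmetry. unfold r. rewrite ecoef_sum by lia. unfold Ll. rewrite rprod_app, rprod_repeat. reflexivity. }
    apply is_lim_seq_mult'; [|apply HPi].
    eapply is_lim_seq_ext; [|apply (explim (alpha * s))]. intros j. simpl.
    f_equal. unfold Rdiv. ring. }

  assert (Hnn : forall s k, 0 <= s -> 0 <= ac k * s ^ k) by (intros; apply Rmult_le_pos; auto; apply pow_le; auto).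
  assert (Hpart : forall s K, 0 <= s -> ssum (fun k => ac k * s ^ k) K <= H s).
  { intros s K Hs. apply (is_lim_seq_incr_compare (fun K => ssum (fun k => ac k * s ^ k) K)); auto.
    intros n; simpl. pose proof (Hnn s n Hs). lra. }
  assert (HPS : forall t, PSeries ac t = H t).
  { intros t. apply is_pseries_unique. apply is_pseries_R. apply is_series_ssum. apply Hac4. }
  set (bf := PS_incr_n ac l).
  assert (Hfser : forall t, f (RtoC t) = (c * RtoC (PSeries bf t))%C).
  { intros t. unfold bf. rewrite PSeries_incr_n, HPS. apply HPi. }
  assert (Hbfb := PS_incr_n_bound ac ac l H (fun k => Req_le _ _ (Rabs_pos_eq _ (Hac3 k))) Hpart).
  assert (HDf0 := CL f c bf Hbfb Hfser Df HDf).
  set (A k := Cmod c * (bf k * INR (Factorial.fact k))).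
  set (Rj j k := Cmod c * (PS_incr_n (r j) l k * INR (Factorial.fact k))).
  assert (Hfact : forall k, 0 < INR (Factorial.fact k)) by (intros; apply INR_fact_lt_0).
  assert (HRj : forall j k, 0 <= Rj j k <= A k).
  { intros j k. unfold Rj, A, bf. pose proof (Cmod_ge_0 c). pose proof (Hfact k).
    assert (0 <= PS_incr_n (r j) l k) by (apply PSI_nonneg; intros; apply ecoef_nonneg, Ll_nonneg; auto).
    assert (PS_incr_n (r j) l k <= PS_incr_n ac l k) by (apply PSI_le; auto).
    split. apply Rmult_le_pos; auto. apply Rmult_le_pos; lra.
    apply Rmult_le_compat_l; auto. apply Rmult_le_compat_r; lra. }
  assert (HRl : forall k, is_lim_seq (fun j => Rj j k) (A k)).
  { intros k. unfold Rj, A. apply (is_lim_seq_scal_l _ (Cmod c) (bf k * INR (Factorial.fact k))).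
    apply (is_lim_seq_scal_r _ (INR (Factorial.fact k)) (bf k)). unfold bf. apply PSI_lim. auto. }
  assert (EV : forall b, In b bs -> eventually (fun j => forall k, / b ^ k * (A k - Rj j k) <= eps / 2)).
  { intros b Hb. specialize (Hbs b Hb).
    set (b' := (a + b) / 2).
    assert (Hb'1 : a < b') by (unfold b'; lra). assert (Hb'2 : b' < b) by (unfold b'; lra).
    pose proof (proj2 HA b' Hb'1) as HA'. unfold seminorm in HA'.
    pose proof (fun H0 => lub_fin _ (/ (b' ^ 0) * Cmod (Df 0%nat (RtoC 0))) H0 HA') as LF.
    destruct LF as [M HM]. { exists Df, 0%nat. split; auto. }
    apply (FIN A Rj M b' b (eps / 2)); auto; try lra.
    intros k. specialize (HM (/ (b' ^ k) * Cmod (Df k (RtoC 0)))). 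
    assert (HM2 := HM ltac:(exists Df, k; split; auto)). clear HM. rename HM2 into HM.
    rewrite HDf0, Cmod_mult, Cmod_R, Rabs_pos_eq in HM.
    2: { apply Rmult_le_pos. unfold bf. apply PSI_nonneg; auto. left; auto. }
    fold (A k) in HM. assert (Hbk : 0 < b' ^ k) by (apply pow_lt; lra).
    apply (Rmult_le_reg_l (/ b' ^ k)). apply Rinv_0_lt_compat; auto.
    replace (/ b' ^ k * (M * b' ^ k)) with M by (field; lra). exact HM. }
  destruct (ev_list _ bs EV) as [J HJ]. specialize (HJ J (le_n _)).
  exists (fun z => (c * Cpow z l * cprodC (Ll alpha beta J) z)%C). split.
  { apply Pplus_of. apply Ll_nonneg; auto. }
  intros b Hb. specialize (HJ b Hb).
  set (bg := PS_incr_n (fun k => r J k - ac k) l).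
  assert (Hgser : forall t, (c * Cpow (RtoC t) l * cprodC (Ll alpha beta J) (RtoC t) - f (RtoC t))%C
                            = (c * RtoC (PSeries bg t))%C).
  { intros t. unfold bg. rewrite PSeries_incr_n.
    assert (E : PSeries (fun k => r J k - ac k) t = rprod (Ll alpha beta J) t - H t).
    { apply is_pseries_unique. apply is_pseries_R. apply is_series_ssum.
      eapply is_lim_seq_ext. intros K. symmetry. apply (ssum_ext _ (fun k => r J k * t ^ k - ac k * t ^ k)). intros; ring.
      eapply is_lim_seq_ext. intros K. symmetry. apply ssum_minus.
      apply is_lim_seq_minus'; [|apply Hac4].
      apply is_lim_seq_ext_loc with (u := fun _ => rprod (Ll alpha beta J) t); [|apply is_lim_seq_const].
      exists (S (length (Ll alpha beta J))). intros K HK. unfold r. symmetry. apply ecoef_sum. lia. }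
    rewrite E, (proj2 (HPi t)), Cpow_R, cprodC_R. unfold H. unfold RtoC, Cmult, Cminus, Cplus, Copp; simpl. f_equal; ring. }
  assert (Hbgb : forall x, exists M, forall n, Rabs (bg n * x ^ n) <= M).
  { apply (PS_incr_n_bound _ ac l H); auto. intros k. pose proof (Hac2 J k). pose proof (HRj J k).
    assert (0 <= r J k) by (apply ecoef_nonneg, Ll_nonneg; auto).
    rewrite Rabs_left1 by lra. lra. }
  assert (Hle : Rbar_le (seminorm (fun z => Cminus (c * Cpow z l * cprodC (Ll alpha beta J) z)%C (f z)) b) (eps / 2)).
  { unfold seminorm. apply lub_le. intros x [D [k [HD Hx]]]. rewrite Hx.
    rewrite (CL _ c bg Hbgb Hgser D HD k). rewrite Cmod_mult, Cmod_R.
    specialize (HJ k). unfold A, Rj in HJ.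
    replace (Cmod c * Rabs (bg k * INR (Factorial.fact k))) with
      (Cmod c * (bf k * INR (Factorial.fact k)) - Cmod c * (PS_incr_n (r J) l k * INR (Factorial.fact k))); [exact HJ|].
    unfold bg. rewrite PSI_minus. rewrite Rabs_mult, (Rabs_pos_eq (INR _)) by (left; auto).
    pose proof (PSI_le (r J) ac l k (Hac2 J)). fold bf. rewrite Rabs_left1 by (fold bf in H0; lra). ring. }
  destruct (seminorm _ b) as [x| |]; simpl in *; auto; lra.
Qed.
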